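(* The morphism $\mathscr E\to\mathscr X$ induced by $\pi$ is a birational equivalence.
   Context: Let $V_1,\dots,V_n$ be two-dimensional complex vector spaces, $\mathscr V_i=\mathfrak{sl}(V_i)$ with form $\langle A,B\rangle=\tfrac12\operatorname{tr}(AB)$, $\mathscr L$ the affine space of trace-one endomorphisms of $V_1\otimes\cdots\otimes V_n$, identified (Bloch model) with $\bigoplus_{\emptyset\ne I\subseteq\{1,\dots,n\}}\mathscr V_I$, $\mathscr V_I=\bigotimes_{i\in I}\mathscr V_i$, via $\rho=2^{-n}\mathrm{id}+\sum_I\rho_I$ (with $\mathscr V_I$ embedded by tensoring with identities). An X-state is a $\rho\in\mathscr L$ which for some ordered bases $\{e^i_0,e^i_1\}$ of the $V_i$ preserves the span of basis tensors $e^1_{\phi(1)}\otimes\cdots\otimes e^n_{\phi(n)}$ with $\sum\phi(i)$ even and the span of those with $\sum\phi(i)$ odd; $\mathscr X$ is the Zariski closure of the set of X-states with reduced structure. Let $\breve P=\prod_i\breve{\mathbb P}(\mathscr V_i)$, with $\breve{\mathbb P}(\mathscr V_i)$ the open set of lines spanned by $v$ with $\langle v,v\rangle\ne0$. For $\mathfrak B=(\mathscr V_1^\ell,\dots,\mathscr V_n^\ell)\in\breve P$, $\mathscr V_i^t=(\mathscr V_i^\ell)^\perp$, $\mathscr V_I^e$ is spanned by tensors $\bigotimes_{i\in I}x_i$ with each $x_i\in\mathscr V_i^\ell$ or $\mathscr V_i^t$ and an even number transversal, and $X(\mathfrak B)=\bigoplus_{\emptyset\ne I}\mathscr V_I^e$.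 $\mathscr E\to\breve P$ is the vector subbundle of $\breve P\times\mathscr L$ with fiber $X(\mathfrak B)$ over $\mathfrak B$, and $\pi:\mathscr E\to\mathscr L$ is the projection, whose image lies in $\mathscr X$. *)

(* Defs.v *)
From HB Require Import structures.
From mathcomp Require Import all_boot all_order all_algebra.
From mathcomp Require Import reals complex mpoly.
Import GRing.Theory Num.Theory.

Set Implicit Arguments.
Unset Strict Implicit.
Unset Printing Implicit Defensive.

Local Open Scope ring_scope.

(* Conventions:
   - V_i = C^2, so End(V_1 (x) ... (x) V_n) = 'M[C]_(2^n); the standard basis
     vector with index j : 'I_(2^n) is the tensor e_{bit j 0} (x) ... (x)
     e_{bit j (n-1)}.
   - sl(V_i) = traceless 2x2 matrices, <A,B> = tr(AB)/2.
   - A point of P-breve is represented by a vector v in sl2 with <v,v> <> 0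
     (the line is span v). *)

Section Defs.
Variable C : fieldType.
Variable n : nat.

Definition bit (j : 'I_(2 ^ n)) (i : 'I_n) : 'I_2 := inord ((j %/ 2 ^ i) %% 2).

Definition parity (j : 'I_(2 ^ n)) : bool := odd (\sum_(i < n) (bit j i : nat)).

Definition tens (B : 'I_n -> 'M[C]_2) : 'M[C]_(2 ^ n) :=
  \matrix_(j, k) \prod_(i < n) B i (bit j i) (bit k i).

Definition in_sl2 (A : 'M[C]_2) : Prop := \tr A = 0.
Definition bform (A B : 'M[C]_2) : C := \tr (A *m B) / 2%:R.

Definition Pbreve_rep (v : 'M[C]_2) : Prop := in_sl2 v /\ bform v v != 0.

Definition longit (v x : 'M[C]_2) : Prop := exists c : C, x = c *: v.
Definition transv (v x : 'M[C]_2) : Prop := in_sl2 x /\ bform v x = 0.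

(* generators of X(B) = (+)_{I nonempty} V_I^e, embedded in End(V) by
   tensoring with identities *)
Definition Xgen (b : 'I_n -> 'M[C]_2) (T : 'M[C]_(2 ^ n)) : Prop :=
  exists (I : {set 'I_n}) (t : 'I_n -> bool) (x : 'I_n -> 'M[C]_2),
    [/\ I != set0,
        ~~ odd #|[set i in I | t i]|,
        (forall i, i \notin I -> x i = 1%:M),
        (forall i, i \in I -> if t i then transv (b i) (x i)
                              else longit (b i) (x i))
      & T = tens x].

Definition inspan (P : 'M[C]_(2 ^ n) -> Prop) (T : 'M[C]_(2 ^ n)) : Prop :=
  exists s : seq (C * 'M[C]_(2 ^ n)),
    (forall p, p \in s -> P p.2) /\ T = \sum_(p <- s) p.1 *: p.2.

Definition Xfib (b : 'I_n -> 'M[C]_2) : 'M[C]_(2 ^ n) -> Prop := inspan (Xgen b).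

(* the Bloch part sum_I rho_I = rho - 2^{-n} id *)
Definition bloch (rho : 'M[C]_(2 ^ n)) : 'M[C]_(2 ^ n) :=
  rho - (2 ^ n)%:R^-1 *: 1%:M.

(* (b, rho) represents a point (B, rho) of the bundle E (B = (span b_i)_i) *)
Definition in_E (b : 'I_n -> 'M[C]_2) (rho : 'M[C]_(2 ^ n)) : Prop :=
  [/\ forall i, Pbreve_rep (b i), \tr rho = 1 & Xfib b (bloch rho)].

(* X-states: trace one, and for some bases (columns of invertible g_i) rho
   maps each basis tensor into the span of the basis tensors of the same
   parity (i.e. preserves the even span and the odd span) *)
Definition is_Xstate (rho : 'M[C]_(2 ^ n)) : Prop :=
  \tr rho = 1 /\
  exists g : 'I_n -> 'M[C]_2,
    (forall i, g i \in unitmx) /\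
    forall j : 'I_(2 ^ n), exists c : 'I_(2 ^ n) -> C,
      rho *m col j (tens g) =
        \sum_(k < 2 ^ n | parity k == parity j) c k *: col k (tens g).

Definition coordL (rho : 'M[C]_(2 ^ n)) : 'I_(2 ^ n * 2 ^ n) -> C :=
  fun j => mxvec rho 0 j.
Definition polyL (p : {mpoly C[2 ^ n * 2 ^ n]}) (rho : 'M[C]_(2 ^ n)) : C :=
  p.@[coordL rho].

(* the Zariski closure X of the set of X-states (closed points) *)
Definition in_X (rho : 'M[C]_(2 ^ n)) : Prop :=
  forall p, (forall s, is_Xstate s -> polyL p s = 0) -> polyL p rho = 0.

Definition coordE (b : 'I_n -> 'M[C]_2) (rho : 'M[C]_(2 ^ n))
  : 'I_(n * (2 * 2) + 2 ^ n * 2 ^ n) -> C :=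
  fun j => row_mx (mxvec (\matrix_(i < n) mxvec (b i))) (mxvec rho) 0 j.
Definition polyE (F : {mpoly C[n * (2 * 2) + 2 ^ n * 2 ^ n]})
  (b : 'I_n -> 'M[C]_2) (rho : 'M[C]_(2 ^ n)) : C :=
  F.@[coordE b rho].

Definition ratmap (pb : 'I_n -> 'I_2 -> 'I_2 -> {mpoly C[2 ^ n * 2 ^ n]})
  (q : {mpoly C[2 ^ n * 2 ^ n]}) (rho : 'M[C]_(2 ^ n)) (i : 'I_n) : 'M[C]_2 :=
  \matrix_(a, a') (polyL (pb i a a') rho / polyL q rho).

End Defs.

(* Main.v *)
Require Import Defs.
From HB Require Import structures.
From mathcomp Require Import all_boot all_order all_algebra.
From mathcomp Require Import reals complex mpoly.
Import GRing.Theory Num.Theory.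
Local Open Scope ring_scope.
Set Implicit Arguments.
Unset Strict Implicit.
Unset Printing Implicit Defensive.

Section Bits.
Variable n : nat.
Definition bits (j : 'I_(2^n)) : {ffun 'I_n -> 'I_2} := [ffun i => bit j i].

Lemma bitE (j : 'I_(2^n)) i : (bit j i : nat) = ((j %/ 2 ^ i) %% 2)%N.
Proof. by rewrite /bit inordK // ltn_pmod. Qed.

Lemma digits_sum m (j : nat) : (j < 2 ^ m)%N ->
  j = (\sum_(i < m) ((j %/ 2 ^ i) %% 2) * 2 ^ i)%N.
Proof.
elim: m j => [|m IH] j hj.
  by rewrite big_ord0; move: hj; rewrite expn0; case: j.
rewrite big_ord_recl /= expn0 divn1 muln1.
have hj2 : (j %/ 2 < 2 ^ m)%N by rewrite ltn_divLR // -expnSr.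
rewrite {1}(divn_eq j 2) {1}(IH _ hj2) addnC; congr (_ + _)%N.
rewrite big_distrl /=; apply: eq_bigr => i _.
by rewrite /bump /= add1n expnS -divnMA [(2 * 2 ^ i)%N]mulnC mulnA.
Qed.

Lemma bits_inj : injective bits.
Proof.
move=> j k h; apply: ord_inj.
rewrite (digits_sum (ltn_ord j)) (digits_sum (ltn_ord k)).
apply: eq_bigr => i _; have := congr1 (fun f : {ffun 'I_n -> 'I_2} => (f i : nat)) h.
by rewrite !ffunE !bitE => ->.
Qed.

Lemma bits_bij : bijective bits.
Proof.
apply: (inj_card_bij bits_inj).
by rewrite card_ffun !card_ord.
Qed.

Lemma sum_bits (R : nmodType) (F : {ffun 'I_n -> 'I_2} -> R) :
  \sum_(j < 2 ^ n) F (bits j) = \sum_f F f.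
Proof.
by rewrite (reindex bits) //; apply: onW_bij; exact: bits_bij.
Qed.
End Bits.

Lemma mxtrace_sum (R : pzRingType) m (I : Type) (r : seq I) (P : pred I) (F : I -> 'M[R]_m) :
  \tr (\sum_(i <- r | P i) F i) = \sum_(i <- r | P i) \tr (F i).
Proof. by apply: (big_morph _ (@mxtraceD _ _)); rewrite mxtrace0. Qed.

Section Tens.
Variable C : fieldType.
Variable n : nat.
Implicit Types x : 'I_n -> 'M[C]_2.

Lemma tensE x j k : tens x j k = \prod_i x i (bits j i) (bits k i).
Proof. by rewrite mxE; apply: eq_bigr => i _; rewrite !ffunE. Qed.

Lemma eq_tens x (y : 'I_n -> 'M[C]_2) : x =1 y -> tens x = tens y.
Proof. by move=> h; apply/matrixP => j k; rewrite !tensE; apply: eq_bigr => i _; rewrite h. Qed.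

Lemma tens_mul x (y : 'I_n -> 'M[C]_2) : tens x *m tens y = tens (fun i => x i *m y i).
Proof.
apply/matrixP => j k; rewrite [RHS]tensE.
transitivity (\prod_i \sum_a x i (bits j i) a * y i a (bits k i)); last first.
  by apply: eq_bigr => i _; rewrite mxE.
rewrite bigA_distr_bigA /= -(sum_bits (fun f => \prod_i (x i (bits j i) (f i) * y i (f i) (bits k i)))).
rewrite mxE; apply: eq_bigr => l _ /=; by rewrite !tensE -big_split.
Qed.

Lemma tens_tr x : \tr (tens x) = \prod_i \tr (x i).
Proof.
transitivity (\prod_i \sum_a x i a a); last by [].
rewrite bigA_distr_bigA /= -(sum_bits (fun f => \prod_i x i (f i) (f i))).
by apply: eq_bigr => j _ /=; rewrite tensE.
Qed.

Lemma tens1 : tens (fun _ => 1%:M) = 1%:M :> 'M[C]_(2 ^ n).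
Proof.
apply/matrixP => j k; rewrite tensE [RHS]mxE.
case: (pickP (fun i => bits j i != bits k i)) => [i hi | h].
  rewrite (bigD1 i) //= mxE (negPf hi) mulr0n mul0r.
  case: eqP => // ejk; move: hi; by rewrite ejk eqxx.
have -> : j = k.
  apply: bits_inj; apply/ffunP => i; by move: (h i) => /= /negbFE /eqP.
rewrite eqxx big1 // => i _; by rewrite mxE eqxx.
Qed.

Lemma tensZ (c : 'I_n -> C) x :
  tens (fun i => c i *: x i) = (\prod_i c i) *: tens x.
Proof.
apply/matrixP => j k; rewrite [RHS]mxE !tensE -big_split /=.
by apply: eq_bigr => i _; rewrite mxE.
Qed.

Lemma tens_sum (I : finType) (F : 'I_n -> I -> 'M[C]_2) :
  tens (fun i => \sum_c F i c) = \sum_(t : {ffun 'I_n -> I}) tens (fun i => F i (t i)).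
Proof.
apply/matrixP => j k; rewrite tensE summxE.
under eq_bigr do rewrite summxE.
rewrite bigA_distr_bigA; apply: eq_bigr => t _; by rewrite tensE.
Qed.

Definition upd i (y : 'M[C]_2) : 'I_n -> 'M[C]_2 :=
  fun l => if l == i then y else 1%:M.

Lemma tens_updE i y j k : tens (upd i y) j k =
  y (bits j i) (bits k i) * \prod_(l | l != i) (1%:M : 'M[C]_2) (bits j l) (bits k l).
Proof.
rewrite tensE (bigD1 i) //= /upd eqxx; congr (_ * _).
by apply: eq_bigr => l /negPf ->.
Qed.

Lemma tens_upd_sum i (I : finType) (F : I -> 'M[C]_2) :
  tens (upd i (\sum_c F c)) = \sum_c tens (upd i (F c)).
Proof.
apply/matrixP => j k; rewrite tens_updE !summxE big_distrl /=.
by apply: eq_bigr => c _; rewrite tens_updE.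
Qed.

Lemma tens_updZ i a y : tens (upd i (a *: y)) = a *: tens (upd i y).
Proof. by apply/matrixP => j k; rewrite [RHS]mxE !tens_updE mxE mulrA. Qed.

Lemma tr_delta m (X : 'M[C]_m) a b : \tr (X *m delta_mx a b) = X b a.
Proof.
rewrite /mxtrace (bigD1 b) //= big1 ?addr0.
  rewrite mxE (bigD1 a) //= big1 ?addr0; first by rewrite mxE !eqxx mulr1.
  by move=> d /negPf hd; rewrite mxE hd mulr0.
move=> c /negPf hc; rewrite mxE big1 // => d _; by rewrite mxE hc andbF mulr0.
Qed.

Definition Mop i (A : 'M[C]_(2 ^ n)) : 'M[C]_2 :=
  \matrix_(a, a') \tr (A *m tens (upd i (delta_mx a' a))).

Lemma tr_Mop i A y : \tr (A *m tens (upd i y)) = \tr (Mop i A *m y).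
Proof.
rewrite {1}(matrix_sum_delta y) tens_upd_sum.
under eq_bigr do rewrite tens_upd_sum.
rewrite !mulmx_sumr mxtrace_sum.
under eq_bigr do rewrite mulmx_sumr mxtrace_sum.
rewrite exchange_big /=.
transitivity (\sum_a (Mop i A *m y) a a); last by [].
apply: eq_bigr => a _.
rewrite mxE; apply: eq_bigr => a' _.
by rewrite tens_updZ -scalemxAr mxtraceZ mxE mulrC.
Qed.

Lemma Mop_tens i x : Mop i (tens x) = (\prod_(l | l != i) \tr (x l)) *: x i.
Proof.
apply/matrixP => a a'; rewrite !mxE tens_mul tens_tr (bigD1 i) //= /upd eqxx.
rewrite tr_delta mulrC; congr (_ * _).
by apply: eq_bigr => l /negPf ->; rewrite mulmx1.
Qed.

Lemma MopD i A B : Mop i (A + B) = Mop i A + Mop i B.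
Proof. by apply/matrixP => a a'; rewrite !mxE mulmxDl mxtraceD. Qed.
Lemma MopZ i c A : Mop i (c *: A) = c *: Mop i A.
Proof. by apply/matrixP => a a'; rewrite !mxE -scalemxAl mxtraceZ. Qed.
Lemma Mop0 i : Mop i 0 = 0.
Proof. by rewrite -(scale0r 0) MopZ scale0r. Qed.
Lemma Mop_lin i (s : seq (C * 'M[C]_(2 ^ n))) :
  Mop i (\sum_(p <- s) p.1 *: p.2) = \sum_(p <- s) p.1 *: Mop i p.2.
Proof.
elim: s => [|p s IH]; first by rewrite !big_nil Mop0.
by rewrite !big_cons MopD MopZ IH.
Qed.

Lemma Mop_conj i (g : 'I_n -> 'M[C]_2) A : (forall l, g l \in unitmx) ->
  Mop i (tens g *m A *m tens (fun l => invmx (g l))) = g i *m Mop i A *m invmx (g i).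
Proof.
move=> hg; apply/matrixP => a a'; rewrite [LHS]mxE.
have E : tens (fun l => invmx (g l)) *m tens (upd i (delta_mx a' a)) *m tens g =
    tens (upd i (invmx (g i) *m delta_mx a' a *m g i)).
  rewrite !tens_mul; apply: eq_tens => l; rewrite /upd.
  by case: eqP => [->|_]; rewrite ?mulmx1 ?mulVmx.
have -> : tens g *m A *m tens (fun l => invmx (g l)) *m tens (upd i (delta_mx a' a))
   = tens g *m (A *m (tens (fun l => invmx (g l)) *m tens (upd i (delta_mx a' a)))).
  by rewrite !mulmxA.
rewrite mxtrace_mulC -[A *m _ *m tens g]mulmxA E tr_Mop.
have -> : \tr (Mop i A *m (invmx (g i) *m delta_mx a' a *m g i)) =
    \tr ((invmx (g i) *m delta_mx a' a) *m (g i *m Mop i A)).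
  by rewrite mxtrace_mulC !mulmxA.
by rewrite mxtrace_mulC !mulmxA tr_delta.
Qed.
End Tens.

From mathcomp Require Import ring.

Lemma big_ord2 (R : nmodType) (F : 'I_2 -> R) : \sum_(i < 2) F i = F ord0 + F ord_max.
Proof. by rewrite big_ord_recl big_ord1; congr (_ + F _); apply: val_inj. Qed.

Lemma ord2P (r : 'I_2) : r = ord0 \/ r = ord_max.
Proof. by case: r => [[|[|r]] hr] //; [left|right]; apply: val_inj. Qed.

Section TwoByTwo.
Variable C : numFieldType.
Implicit Types u v b w y : 'M[C]_2.

Lemma tr2 u : \tr u = u ord0 ord0 + u ord_max ord_max.
Proof. by rewrite /mxtrace big_ord2. Qed.

Lemma anticomm u v : in_sl2 u -> in_sl2 v ->
  u *m v + v *m u = (\tr (u *m v)) *: 1%:M.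
Proof.
rewrite /in_sl2 => hu hv; rewrite tr2 in hu; rewrite tr2 in hv.
have hu' : u ord_max ord_max = - u ord0 ord0 by apply/eqP; rewrite -addr_eq0 addrC hu.
have hv' : v ord_max ord_max = - v ord0 ord0 by apply/eqP; rewrite -addr_eq0 addrC hv.
rewrite tr2 !mxE !big_ord2 hu' hv'.
apply/matrixP => r c; rewrite !mxE !big_ord2.
by case: (ord2P r) => ->; case: (ord2P c) => ->; rewrite /= ?hu' ?hv'; ring.
Qed.
End TwoByTwo.

Lemma mxtraceN (R : pzRingType) m (A : 'M[R]_m) : \tr (- A) = - \tr A.
Proof. by rewrite /mxtrace -sumrN; apply: eq_bigr => i _; rewrite mxE. Qed.
Lemma mxtraceB (R : pzRingType) m (A B : 'M[R]_m) : \tr (A - B) = \tr A - \tr B.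
Proof. by rewrite mxtraceD mxtraceN. Qed.

Section TwoByTwoB.
Variable C : numFieldType.
Implicit Types u v b w y : 'M[C]_2.

Lemma two_neq0 : (2%:R : C) != 0.
Proof. by rewrite pnatr_eq0. Qed.

Lemma sq_b b : in_sl2 b -> b *m b = bform b b *: 1%:M.
Proof.
move=> hb; have h := anticomm hb hb.
have : (b *m b) *+ 2 = (\tr (b *m b)) *: 1%:M by rewrite mulr2n.
move/(congr1 (fun M => (2%:R : C)^-1 *: M)).
rewrite -scaler_nat scalerA mulVf ?two_neq0 // scale1r scalerA => ->.
by rewrite /bform mulrC.
Qed.

Lemma tr_bform u v : \tr (u *m v) = 2%:R * bform u v.
Proof. by rewrite /bform mulrC mulfVK ?two_neq0. Qed.

Lemma conj_transv b w : in_sl2 b -> transv b w -> b *m w *m b = - bform b b *: w.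
Proof.
move=> hb [hw hbw]; have h := anticomm hb hw.
rewrite tr_bform hbw mulr0 scale0r in h.
have e : b *m w = - (w *m b) by apply/eqP; rewrite -addr_eq0 h.
by rewrite e mulNmx -mulmxA sq_b // -scalemxAr mulmx1 scaleNr.
Qed.

Lemma conj_b b : in_sl2 b -> b *m b *m b = bform b b *: b.
Proof. by move=> hb; rewrite sq_b // -scalemxAl mul1mx. Qed.

Lemma conj_1 b : in_sl2 b -> b *m 1%:M *m b = bform b b *: 1%:M.
Proof. by move=> hb; rewrite mulmx1 sq_b. Qed.

Definition Qb b y := y - (\tr y / 2%:R) *: 1%:M - (bform b y / bform b b) *: b.

Lemma Qb_decomp b y :
  y = (\tr y / 2%:R) *: 1%:M + (bform b y / bform b b) *: b + Qb b y.
Proof. by rewrite /Qb -[_ - _ - (_ *: b)]addrA -opprD addrC addNKr. Qed.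

Lemma Qb_transv b y : in_sl2 b -> bform b b != 0 -> transv b (Qb b y).
Proof.
move=> hb hbb; split.
  rewrite /in_sl2 /Qb !mxtraceB !mxtraceZ mxtrace1 hb mulr0 subr0.
  by rewrite mulfVK ?two_neq0 // subrr.
rewrite /bform /Qb !mulmxBr -!scalemxAr mulmx1 !mxtraceB !mxtraceZ hb mulr0 subr0.
rewrite -/(bform b y).
have e : \tr (b *m b) = 2%:R * bform b b by rewrite tr_bform.
rewrite e tr_bform; apply/eqP; rewrite mulf_eq0 subr_eq0; apply/orP; left.
apply/eqP; field; exact: hbb.
Qed.

Lemma conj_transv' b w : in_sl2 b -> bform b b != 0 -> transv b w ->
  (bform b b)^-1 *: (b *m w *m b) = -1 *: w.
Proof.
by move=> hb hbb hw; rewrite conj_transv // scalerA mulrN mulVf.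
Qed.
Lemma conj_b' b : in_sl2 b -> bform b b != 0 ->
  (bform b b)^-1 *: (b *m b *m b) = 1 *: b.
Proof. by move=> hb hbb; rewrite conj_b // scalerA mulVf. Qed.
Lemma conj_1' b : in_sl2 b -> bform b b != 0 ->
  (bform b b)^-1 *: (b *m 1%:M *m b) = 1 *: 1%:M.
Proof. by move=> hb hbb; rewrite conj_1 // scalerA mulVf. Qed.
End TwoByTwoB.

Section Span.
Variable C : fieldType.
Variable n : nat.
Implicit Types P Q : 'M[C]_(2 ^ n) -> Prop.

Lemma inspan0 P : inspan P 0.
Proof. by exists [::]; split => //; rewrite big_nil. Qed.

Lemma inspan_gen P T : P T -> inspan P T.
Proof.
move=> h; exists [:: (1, T)]; split; last by rewrite big_seq1 scale1r.
by move=> p; rewrite inE => /eqP ->.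
Qed.

Lemma inspanD P A B : inspan P A -> inspan P B -> inspan P (A + B).
Proof.
move=> [s [hs ->]] [t [ht ->]]; exists (s ++ t); split; last by rewrite big_cat.
by move=> p; rewrite mem_cat => /orP [/hs|/ht].
Qed.

Lemma inspanZ P c A : inspan P A -> inspan P (c *: A).
Proof.
move=> [s [hs ->]]; exists [seq (c * p.1, p.2) | p <- s]; split.
  by move=> p /mapP [p' /hs h ->].
by rewrite big_map scaler_sumr; apply: eq_bigr => p _; rewrite scalerA.
Qed.

Lemma inspan_sum P (I : Type) (r : seq I) (R : pred I) (F : I -> 'M[C]_(2 ^ n)) :
  (forall i, R i -> inspan P (F i)) -> inspan P (\sum_(i <- r | R i) F i).
Proof. by move=> h; apply: big_ind => //; [exact: inspan0|exact: inspanD]. Qed.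

Lemma inspan_mono P Q T : (forall M, P M -> Q M) -> inspan P T -> inspan Q T.
Proof. by move=> h [s [hs ->]]; exists s; split => // p /hs /h. Qed.

Lemma prod_eq_bits (u j : 'I_(2 ^ n)) :
  \prod_i ((bits u i == bits j i)%:R : C) = (u == j)%:R.
Proof.
case: (pickP (fun i => bits u i != bits j i)) => [i hi | h].
  rewrite (bigD1 i) //= (negPf hi) mul0r.
  case: eqP => // e; move: hi; by rewrite e eqxx.
have -> : u = j by apply: bits_inj; apply/ffunP => i; move: (h i) => /= /negbFE /eqP.
by rewrite eqxx big1 // => i _; rewrite eqxx.
Qed.

Lemma tens_delta (j k : 'I_(2 ^ n)) :
  tens (fun i => delta_mx (bits j i) (bits k i)) = delta_mx j k :> 'M[C]_(2 ^ n).
Proof.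
apply/matrixP => u v; rewrite tensE [RHS]mxE.
transitivity (\prod_i (((bits u i == bits j i)%:R : C) * (bits v i == bits k i)%:R)).
  by apply: eq_bigr => i _; rewrite mxE -mulnb natrM.
by rewrite big_split /= !prod_eq_bits -mulnb natrM.
Qed.
End Span.

Section Key.
Variable C : numFieldType.
Variable n : nat.

Lemma Xgen_tr (b : 'I_n -> 'M[C]_2) T : (forall i, in_sl2 (b i)) -> Xgen b T -> \tr T = 0.
Proof.
move=> hb [I [t [x [hI _ _ hx ->]]]].
case/set0Pn: hI => i hi.
rewrite tens_tr (bigD1 i) //=; apply/eqP; rewrite mulf_eq0; apply/orP; left.
move: (hx i hi); case: (t i) => [[h _]|[c ->]]; first by rewrite h.
by rewrite mxtraceZ (hb i) mulr0.
Qed.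

Lemma inspan_tr (b : 'I_n -> 'M[C]_2) T : (forall i, in_sl2 (b i)) -> inspan (Xgen b) T -> \tr T = 0.
Proof.
move=> hb [s [hs ->]]; rewrite mxtrace_sum big1_seq // => p /andP [_ /hs h].
by rewrite mxtraceZ (Xgen_tr hb h) mulr0.
Qed.

Lemma prod_sign (I : finType) (P : pred I) :
  \prod_i (if P i then -1 else 1 : C) = (-1) ^+ #|P|.
Proof.
rewrite (bigID P) /= [X in _ * X]big1 ?mulr1; last by move=> i /negPf ->.
rewrite (eq_bigr (fun _ => -1)); last by move=> i ->.
by rewrite prodr_const.
Qed.

End Key.

Section Key2.
Variable C : numFieldType.
Variable n : nat.

Lemma key (b : 'I_n -> 'M[C]_2) T :
  (forall i, Pbreve_rep (b i)) -> \tr T = 0 -> T *m tens b = tens b *m T -> Xfib b T.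
Proof.
move=> hb hT hc.
have hsl i : in_sl2 (b i) by case: (hb i).
have hmu i : bform (b i) (b i) != 0 by case: (hb i).
pose Z' := tens (fun i => (bform (b i) (b i))^-1 *: b i).
have hZ : Z' *m tens b = 1%:M.
  rewrite tens_mul -tens1; apply: eq_tens => i.
  by rewrite -scalemxAl sq_b // scalerA mulVf // scale1r.
have conjG (G : 'I_n -> 'M[C]_2) : Z' *m tens G *m tens b =
    tens (fun i => (bform (b i) (b i))^-1 *: (b i *m G i *m b i)).
  by rewrite !tens_mul; apply: eq_tens => i; rewrite -!scalemxAl.
pose Pset M := Xgen b M \/ M = 1%:M.
suff hP : inspan Pset T.
  case: hP => s [hs hTs].
  rewrite (bigID (fun p => p.2 == 1%:M)) /= in hTs.
  set S1 := \sum_(p <- s | p.2 == 1%:M) _ in hTs.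
  set S2 := \sum_(p <- s | p.2 != 1%:M) _ in hTs.
  have e1 : S1 = (\sum_(p <- s | p.2 == 1%:M) p.1) *: 1%:M.
    by rewrite /S1 scaler_suml; apply: eq_bigr => p /eqP ->.
  have h2 : inspan (Xgen b) S2.
    rewrite /S2 big_seq_cond; apply: inspan_sum => p /andP [ps hp].
    apply: inspanZ; apply: inspan_gen.
    by case: (hs p ps) => // h; rewrite h eqxx in hp.
  have tr2 := inspan_tr hsl h2.
  rewrite hTs mxtraceD e1 mxtraceZ mxtrace1 tr2 addr0 in hT.
  move/eqP: hT; rewrite mulf_eq0 pnatr_eq0 expn_eq0 /= orbF => /eqP c0.
  by rewrite /Xfib hTs e1 c0 scale0r add0r.
pose L := fun M : 'M[C]_(2 ^ n) => M + Z' *m M *m tens b.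
have LD A B : L (A + B) = L A + L B.
  by rewrite /L mulmxDr mulmxDl addrACA.
have LZ c A : L (c *: A) = c *: L A.
  by rewrite /L -scalemxAr -scalemxAl scalerDr.
have L0 : L 0 = 0 by rewrite /L mulmx0 mul0mx addr0.
have L_sum (I : Type) (r : seq I) (P : pred I) F :
    L (\sum_(i <- r | P i) F i) = \sum_(i <- r | P i) L (F i).
  exact: (big_morph L LD L0).
have eT : T = 2%:R^-1 *: L T.
  have -> : L T = T + T by rewrite /L -mulmxA hc mulmxA hZ mul1mx.
  by rewrite -mulr2n -scaler_nat scalerA mulVf ?two_neq0 // scale1r.
rewrite eT; apply: inspanZ.
rewrite (matrix_sum_delta T) L_sum; apply: inspan_sum => j _.
rewrite L_sum; apply: inspan_sum => k _; rewrite LZ; apply: inspanZ.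
rewrite -tens_delta.
pose e i := delta_mx (bits j i) (bits k i) : 'M[C]_2.
pose coef (c : 'I_3) i : C := if (c : nat) == 0%N then \tr (e i) / 2%:R
  else if (c : nat) == 1%N then bform (b i) (e i) / bform (b i) (b i) else 1.
pose G (c : 'I_3) i : 'M[C]_2 := if (c : nat) == 0%N then 1%:M
  else if (c : nat) == 1%N then b i else Qb (b i) (e i).
have ee i : e i = \sum_(c < 3) coef c i *: G c i.
  by rewrite !big_ord_recl big_ord0 addr0 /= scale1r addrA; exact: Qb_decomp.
rewrite (eq_tens ee) tens_sum L_sum; apply: inspan_sum => t _.
rewrite (tensZ (fun i => coef (t i) i) (fun i => G (t i) i)) LZ; apply: inspanZ.
rewrite /L conjG.
have hs i : (bform (b i) (b i))^-1 *: (b i *m G (t i) i *m b i) =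
    (if (t i : nat) == 2%N then -1 else 1) *: G (t i) i.
  rewrite /G; case: (t i) => [[|[|[|m]]] hm] //=.
  - exact: conj_1'.
  - exact: conj_b'.
  - by apply: conj_transv' => //; exact: Qb_transv.
rewrite (eq_tens hs) (tensZ (fun i => if (t i : nat) == 2%N then -1 else 1) (fun i => G (t i) i)).
rewrite prod_sign.
case: (boolP (odd #|(fun i => (t i : nat) == 2%N)|)) => hodd.
  by rewrite -signr_odd hodd expr1 scaleN1r subrr; exact: inspan0.
rewrite -signr_odd (negPf hodd) expr0 scale1r -mulr2n -scaler_nat.
apply: inspanZ; apply: inspan_gen.
case: (pickP (fun i => (t i : nat) != 0%N)) => [i0 hi0 | hall]; last first.
  right; rewrite -tens1; apply: eq_tens => i.
  by move: (hall i) => /= /negbFE /eqP; rewrite /G => ->.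
left; exists [set i | (t i : nat) != 0%N], (fun i => (t i : nat) == 2%N), (fun i => G (t i) i).
split => //.
- by apply/set0Pn; exists i0; rewrite inE.
- suff -> : #|[set i in [set i | (t i : nat) != 0%N] | (t i : nat) == 2%N]| =
     #|(fun i => (t i : nat) == 2%N)| by [].
  apply: eq_card => i; rewrite !inE.
  by rewrite -topredE /=; case: (t i) => [[|[|[|m]]] hm].
- by move=> i; rewrite inE negbK /G => /eqP ->.
- move=> i; rewrite inE /G; case: (t i) => [[|[|[|m]]] hm] //= _.
  + by exists 1; rewrite scale1r.
  + exact: Qb_transv.
Qed.
End Key2.

Lemma mul_col (R : pzSemiRingType) m p q (A : 'M[R]_(m, p)) (B : 'M[R]_(p, q)) i j :
  (A *m col j B) i 0 = (A *m B) i j.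
Proof. by rewrite !mxE; apply: eq_bigr => x _; rewrite /col [X in _ * X]mxE. Qed.

Section Xstates.
Variable C : numFieldType.
Variable n : nat.

Lemma two_pow_neq0 : ((2 ^ n)%:R : C) != 0.
Proof. by rewrite pnatr_eq0 expn_eq0. Qed.

Lemma bloch_tr (A : 'M[C]_(2 ^ n)) : \tr (bloch A) = \tr A - 1.
Proof. by rewrite /bloch mxtraceB mxtraceZ mxtrace1 mulVf // two_pow_neq0. Qed.

Lemma Mop_tr i (A : 'M[C]_(2 ^ n)) : \tr (Mop i A) = \tr A.
Proof.
have := tr_Mop i A 1%:M; rewrite mulmx1 => <-.
rewrite (_ : tens (upd i 1%:M) = 1%:M) ?mulmx1 // -tens1.
by apply: eq_tens => l; rewrite /upd; case: ifP.
Qed.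

Lemma Mop_offdiag i (A : 'M[C]_(2 ^ n)) a a' :
  (forall u v, parity u != parity v -> A u v = 0) -> a != a' -> Mop i A a a' = 0.
Proof.
move=> hA haa; rewrite mxE /mxtrace big1 // => u _; rewrite mxE big1 // => v _.
rewrite tens_updE mxE.
case: (eqVneq (bits v i) a') => [hv|hv]; last by rewrite /= !(mul0r, mulr0, mulr0n).
case: (eqVneq (bits u i) a) => [hu|hu]; last by rewrite /= !(mul0r, mulr0, mulr0n).
case: (pickP (fun l => (l != i) && (bits v l != bits u l))) => [l /andP [hli hl] | hall].
  by rewrite (bigD1 l) //= mxE (negPf hl) mulr0n mul0r mulr0 mulr0.
rewrite hA ?mul0r //.
have er : (\sum_(l < n | l != i) (bit u l : nat) = \sum_(l < n | l != i) (bit v l : nat))%N.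
  apply: eq_bigr => l hl; move: (hall l); rewrite hl /= => /negbFE /eqP.
  by rewrite !ffunE => ->.
rewrite /parity (bigD1 i) //= [X in _ != odd X](bigD1 i) //= er !oddD.
move: hu hv; rewrite !ffunE => -> ->.
by case: (ord2P a) haa => ->; case: (ord2P a') => -> //=; case: odd.
Qed.

Definition sz : 'M[C]_2 := \matrix_(a, a') ((a == a')%:R * (-1) ^+ (a : nat)).

Lemma diag_sz (M : 'M[C]_2) : M ord0 ord_max = 0 -> M ord_max ord0 = 0 ->
  \tr M = 0 -> M = M ord0 ord0 *: sz.
Proof.
move=> h01 h10; rewrite tr2 => ht.
have h11 : M ord_max ord_max = - M ord0 ord0.
  by apply/eqP; rewrite -addr_eq0 addrC ht.
apply/matrixP => r c; rewrite !mxE.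
case: (ord2P r) => ->; case: (ord2P c) => -> /=.
- by rewrite expr0 !mulr1.
- by rewrite h01 mul0r mulr0.
- by rewrite h10 mul0r mulr0.
- by rewrite h11 expr1 mul1r mulrN1.
Qed.

Definition Sz : 'M[C]_(2 ^ n) := tens (fun _ : 'I_n => sz).

Lemma Sz_entry u v : Sz u v = (u == v)%:R * (-1) ^+ parity u.
Proof.
rewrite /Sz tensE.
transitivity (\prod_i (((bits u i == bits v i)%:R : C) * (-1) ^+ (bit u i : nat))).
  by apply: eq_bigr => i _; rewrite mxE ffunE.
by rewrite big_split /= prod_eq_bits prodrXr signr_odd.
Qed.

Lemma Xshape_comm (D : 'M[C]_(2 ^ n)) :
  (forall u v, parity u != parity v -> D u v = 0) -> D *m Sz = Sz *m D.
Proof.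
move=> hD; apply/matrixP => u v; rewrite !mxE.
rewrite (bigD1 v) //= big1 ?addr0; last first.
  by move=> w /negPf hw; rewrite Sz_entry hw mul0r mulr0.
rewrite (bigD1 u) //= [X in _ = _ + X]big1 ?addr0; last first.
  by move=> w; rewrite eq_sym => /negPf hw; rewrite Sz_entry hw !mul0r.
rewrite !Sz_entry !eqxx !mul1r.
case: (eqVneq (parity u) (parity v)) => [->|huv]; first by rewrite mulrC.
by rewrite hD // mul0r mulr0.
Qed.

Lemma Xstate_comm (s : 'M[C]_(2 ^ n)) : is_Xstate s ->
  s *m tens (fun i => Mop i (bloch s)) = tens (fun i => Mop i (bloch s)) *m s.
Proof.
case=> htr [g [hg hcol]].
set G := tens g; set Gi := tens (fun l => invmx (g l)).
have hGGi : G *m Gi = 1%:M.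
  by rewrite /G /Gi tens_mul -tens1; apply: eq_tens => l; rewrite mulmxV.
have hGiG : Gi *m G = 1%:M.
  by rewrite /G /Gi tens_mul -tens1; apply: eq_tens => l; rewrite mulVmx.
set D := Gi *m s *m G.
have hs : s = G *m D *m Gi by rewrite /D !mulmxA hGGi mul1mx -mulmxA hGGi mulmx1.
have hD u v : parity u != parity v -> D u v = 0.
  move=> huv; have [c hc] := hcol v.
  have e : D u v = (Gi *m (s *m col v G)) u 0.
    by rewrite /D mulmxA mul_col.
  rewrite e hc mulmx_sumr summxE big1 // => k hk.
  rewrite -scalemxAr mxE.
  have -> : (Gi *m col k G) u 0 = (Gi *m G) u k by rewrite mul_col.
  rewrite hGiG mxE.
  case: (eqVneq u k) => [euk|_]; last by rewrite mulr0n mulr0.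
  by move: huv; rewrite euk (eqP hk) eqxx.
have hbl : bloch s = G *m bloch D *m Gi.
  by rewrite /bloch mulmxBr mulmxBl -hs -scalemxAr mulmx1 -scalemxAl hGGi.
have hblD u v : parity u != parity v -> bloch D u v = 0.
  move=> huv; rewrite /bloch mxE hD // !mxE.
  case: (eqVneq u v) => [euv|_]; first by move: huv; rewrite euv eqxx.
  by rewrite mulr0n mulr0 subr0.
have trD : \tr (bloch D) = 0.
  by rewrite bloch_tr /D -mulmxA mxtrace_mulC -mulmxA hGGi mulmx1 htr subrr.
pose d i := Mop i (bloch D) ord0 ord0.
have hM i : Mop i (bloch s) = g i *m (d i *: sz) *m invmx (g i).
  rewrite hbl Mop_conj // -diag_sz //.
  - by apply: Mop_offdiag.
  - by apply: Mop_offdiag.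
  - by rewrite Mop_tr.
have hT : tens (fun i => Mop i (bloch s)) = G *m ((\prod_i d i) *: Sz) *m Gi.
  rewrite (eq_tens hM) /Sz -(tensZ d (fun _ => sz)) /G /Gi !tens_mul.
  by apply: eq_tens.
set X := (\prod_i d i) *: Sz.
have e1 : s *m (G *m X *m Gi) = G *m (D *m X) *m Gi.
  by rewrite /D !mulmxA hGGi mul1mx.
have e2 : (G *m X *m Gi) *m s = G *m (X *m D) *m Gi.
  by rewrite /D !mulmxA -[G *m X *m Gi *m s *m G *m Gi]mulmxA hGGi mulmx1.
rewrite hT e1 e2 /X -scalemxAr -scalemxAl Xshape_comm //.
Qed.
End Xstates.

Lemma col_mulmx (R : pzSemiRingType) m p q (A : 'M[R]_(m, p)) (B : 'M[R]_(p, q)) j :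
  col j (A *m B) = A *m col j B.
Proof. by apply/matrixP => r c; rewrite (ord1 c) mul_col /col mxE. Qed.

Section More.
Variable C : numFieldType.
Variable n : nat.

Lemma bform_scale (c : C) (u : 'M[C]_2) : bform (c *: u) (c *: u) = c * c * bform u u.
Proof. by rewrite /bform -scalemxAl -scalemxAr !mxtraceZ !mulrA. Qed.

Lemma bform_conj (g u : 'M[C]_2) : g \in unitmx ->
  bform (g *m u *m invmx g) (g *m u *m invmx g) = bform u u.
Proof.
move=> hg; rewrite /bform; congr (_ / _).
rewrite -!mulmxA [invmx g *m _]mulmxA mulVmx // mul1mx !mulmxA.
by rewrite mxtrace_mulC !mulmxA mulVmx // mul1mx.
Qed.

Lemma bform_sz : bform (sz C) (sz C) = 1.
Proof.
rewrite /bform tr2 !mxE !big_ord2 !mxE /= expr0 expr1.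
rewrite !(mul1r, mul0r, mulr1, mulr0, addr0, add0r, mulrN1, opprK).
have -> : (1 + 1 : C) = 2%:R by rewrite -mulr2n.
by rewrite mulfV // two_neq0.
Qed.

Lemma sz_sl2 : in_sl2 (sz C).
Proof.
rewrite /in_sl2 tr2 !mxE /= expr0 expr1.
by rewrite !(mul1r, mul0r, mulr1, mulr0, addr0, add0r, mulrN1, opprK) subrr.
Qed.

Lemma Mop_sumI i (I : Type) (r : seq I) (P : pred I) (F : I -> 'M[C]_(2 ^ n)) :
  Mop i (\sum_(k <- r | P k) F k) = \sum_(k <- r | P k) Mop i (F k).
Proof. exact: (big_morph (Mop i) (MopD i) (Mop0 C i)). Qed.

Definition kap (i : 'I_n) : C := \prod_(l | l != i) 2%:R.

Lemma kap_neq0 i : kap i != 0.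
Proof. by apply/prodf_neq0 => l _; exact: two_neq0. Qed.

Lemma Mop_upd i k (y : 'M[C]_2) : in_sl2 y ->
  Mop i (tens (upd k y)) = if k == i then kap i *: y else 0.
Proof.
move=> hy; rewrite Mop_tens /upd.
case: (eqVneq k i) => [->|hki].
  rewrite ?eqxx; congr (_ *: _); apply: eq_bigr => l /negPf ->.
  by rewrite mxtrace1.
rewrite (bigD1 k) //=; case: eqP => // _; by rewrite hy mul0r scale0r.
Qed.

Lemma Mop_sum_upd i (y : 'I_n -> 'M[C]_2) : (forall k, in_sl2 (y k)) ->
  Mop i (\sum_k tens (upd k (y k))) = kap i *: y i.
Proof.
move=> hy; rewrite Mop_sumI (bigD1 i) //= Mop_upd // eqxx big1 ?addr0 //.
by move=> k /negPf hk; rewrite Mop_upd // hk.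
Qed.

Lemma tr_tens_upd (k : 'I_n) (y : 'M[C]_2) : in_sl2 y -> \tr (tens (upd k y)) = 0.
Proof. by move=> hy; rewrite tens_tr (bigD1 k) //= /upd; case: eqP => // _; rewrite hy mul0r. Qed.

Lemma bloch_conj (G Gi A : 'M[C]_(2 ^ n)) : G *m Gi = 1%:M ->
  bloch (G *m A *m Gi) = G *m bloch A *m Gi.
Proof.
by move=> h; rewrite /bloch mulmxBr mulmxBl -scalemxAr mulmx1 -scalemxAl h.
Qed.

Definition Xshape (D : 'M[C]_(2 ^ n)) := forall u v, parity u != parity v -> D u v = 0.

Lemma mul_col_sum (G D : 'M[C]_(2 ^ n)) j :
  G *m col j D = \sum_k D k j *: col k G.
Proof.
apply/matrixP => r c; rewrite !mxE summxE; apply: eq_bigr => k _.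
by rewrite !mxE mulrC.
Qed.

Lemma Xstate_decomp (s : 'M[C]_(2 ^ n)) : is_Xstate s ->
  exists g : 'I_n -> 'M[C]_2, (forall l, g l \in unitmx) /\
  exists D, Xshape D /\ s = tens g *m D *m tens (fun l => invmx (g l)).
Proof.
case=> htr [g [hg hcol]]; exists g; split => //.
set G := tens g; set Gi := tens (fun l => invmx (g l)).
have hGGi : G *m Gi = 1%:M.
  by rewrite /G /Gi tens_mul -tens1; apply: eq_tens => l; rewrite mulmxV.
have hGiG : Gi *m G = 1%:M.
  by rewrite /G /Gi tens_mul -tens1; apply: eq_tens => l; rewrite mulVmx.
exists (Gi *m s *m G); split; last by rewrite !mulmxA hGGi mul1mx -mulmxA hGGi mulmx1.
move=> u v huv; have [c hc] := hcol v.
have -> : (Gi *m s *m G) u v = (Gi *m (s *m col v G)) u 0 by rewrite mulmxA mul_col.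
rewrite hc mulmx_sumr summxE big1 // => k hk.
rewrite -scalemxAr mxE.
have -> : (Gi *m col k G) u 0 = (Gi *m G) u k by rewrite mul_col.
rewrite hGiG mxE.
case: (eqVneq u k) => [euk|_]; last by rewrite mulr0n mulr0.
by move: huv; rewrite euk (eqP hk) eqxx.
Qed.

Lemma Xstate_of (g : 'I_n -> 'M[C]_2) D : (forall l, g l \in unitmx) -> Xshape D ->
  \tr (tens g *m D *m tens (fun l => invmx (g l))) = 1 ->
  is_Xstate (tens g *m D *m tens (fun l => invmx (g l))).
Proof.
move=> hg hD htr; split => //; exists g; split => // j.
exists (fun k => D k j).
have hGiG : tens (fun l => invmx (g l)) *m tens g = 1%:M.
  by rewrite tens_mul -tens1; apply: eq_tens => l; rewrite mulVmx.
have -> : tens g *m D *m tens (fun l => invmx (g l)) *m col j (tens g) = tens g *m col j D.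
  rewrite -!mulmxA -col_mulmx hGiG -col_mulmx mulmx1.
  done.
rewrite mul_col_sum (bigID (fun k => parity k == parity j)) /= [X in _ + X]big1 ?addr0 //.
by move=> k hk; rewrite hD ?scale0r // (negbTE hk).
Qed.
End More.

Section PF.
Variable C : numFieldType.
Variable n : nat.

Lemma Mop_Xgen (b : 'I_n -> 'M[C]_2) i T : (forall l, in_sl2 (b l)) ->
  Xgen b T -> exists c, Mop i T = c *: b i.
Proof.
move=> hb [I [t [x [hI hodd hout hin ->]]]]; rewrite Mop_tens.
have trx l : l \in I -> \tr (x l) = 0.
  move=> hl; move: (hin l hl); case: (t l) => [[h _]|[c ->]]; first exact: h.
  by rewrite mxtraceZ (hb l) mulr0.
case: (pickP (fun l => (l \in I) && (l != i))) => [l /andP [hl hli] | hno].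
  by exists 0; rewrite (bigD1 l) //= trx // mul0r !scale0r.
have hiI : i \in I.
  case/set0Pn: hI => l hl; case: (eqVneq l i) => [<- // | hli].
  by move: (hno l); rewrite /= hl hli.
have hti : t i = false.
  apply/negbTE/negP => hti; move: hodd.
  have -> : [set l in I | t l] = [set i].
    apply/setP => l; rewrite !inE; case: (eqVneq l i) => [->|hli]; first by rewrite hiI hti.
    by move: (hno l); rewrite /= hli andbT => ->.
  by rewrite cards1.
move: (hin i hiI); rewrite hti => -[c ->].
by exists ((\prod_(l | l != i) \tr (x l)) * c); rewrite scalerA.
Qed.

Lemma Mop_Xfib (b : 'I_n -> 'M[C]_2) i T : (forall l, in_sl2 (b l)) ->
  Xfib b T -> exists c, Mop i T = c *: b i.
Proof.
move=> hb [s [hs ->]]; rewrite Mop_lin.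
elim: s hs => [|p s IH] hs; first by exists 0; rewrite big_nil scale0r.
have [c1 h1] := Mop_Xgen i hb (hs p (mem_head _ _)).
have [c2 h2] : exists c, \sum_(p <- s) p.1 *: Mop i p.2 = c *: b i.
  by apply: IH => q hq; apply: hs; rewrite inE hq orbT.
by exists (p.1 * c1 + c2); rewrite big_cons h1 h2 scalerA scalerDl.
Qed.

Definition pf (f : 'M[C]_(2 ^ n) -> C) := exists p, forall rho, f rho = polyL p rho.

Lemma pf_ext f g : (forall rho, f rho = g rho) -> pf f -> pf g.
Proof. by move=> e [p hp]; exists p => rho; rewrite -e hp. Qed.
Lemma pf_const c : pf (fun _ => c).
Proof. by exists c%:MP => rho; rewrite /polyL mevalC. Qed.
Lemma pf_entry j k : pf (fun rho => rho j k).
Proof. by exists 'X_(mxvec_index j k) => rho; rewrite /polyL mevalXU /coordL mxvecE. Qed.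
Lemma pf_add f g : pf f -> pf g -> pf (fun rho => f rho + g rho).
Proof. by move=> [p hp] [q hq]; exists (p + q) => rho; rewrite /polyL mevalD hp hq. Qed.
Lemma pf_mul f g : pf f -> pf g -> pf (fun rho => f rho * g rho).
Proof. by move=> [p hp] [q hq]; exists (p * q) => rho; rewrite /polyL mevalM hp hq. Qed.
Lemma pf_opp f : pf f -> pf (fun rho => - f rho).
Proof. by move=> [p hp]; exists (- p) => rho; rewrite /polyL mevalN hp. Qed.
Lemma pf_sum (I : Type) (r : seq I) (P : pred I) F : (forall i, pf (F i)) ->
  pf (fun rho => \sum_(i <- r | P i) F i rho).
Proof.
move=> h; elim: r => [|i r IH].
  by apply: pf_ext (pf_const 0) => rho; rewrite big_nil.
case hPi : (P i).
  by apply: pf_ext (pf_add (h i) IH) => rho; rewrite big_cons hPi.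
by apply: pf_ext IH => rho; rewrite big_cons hPi.
Qed.
Lemma pf_prod (I : Type) (r : seq I) (P : pred I) F : (forall i, pf (F i)) ->
  pf (fun rho => \prod_(i <- r | P i) F i rho).
Proof.
move=> h; elim: r => [|i r IH].
  by apply: pf_ext (pf_const 1) => rho; rewrite big_nil.
case hPi : (P i).
  by apply: pf_ext (pf_mul (h i) IH) => rho; rewrite big_cons hPi.
by apply: pf_ext IH => rho; rewrite big_cons hPi.
Qed.

End PF.

Section Upoly.
Variable C : numFieldType.

Definition upf (f : C -> C) := exists P : {poly C}, forall t, f t = P.[t].

Lemma upf_ext f g : (forall t, f t = g t) -> upf f -> upf g.
Proof. by move=> e [p hp]; exists p => t; rewrite -e hp. Qed.
Lemma upf_const c : upf (fun _ => c).
Proof. by exists c%:P => t; rewrite hornerC. Qed.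
Lemma upf_id : upf (fun t => t).
Proof. by exists 'X => t; rewrite hornerX. Qed.
Lemma upf_add f g : upf f -> upf g -> upf (fun t => f t + g t).
Proof. by move=> [p hp] [q hq]; exists (p + q) => t; rewrite hornerD hp hq. Qed.
Lemma upf_mul f g : upf f -> upf g -> upf (fun t => f t * g t).
Proof. by move=> [p hp] [q hq]; exists (p * q) => t; rewrite hornerM hp hq. Qed.
Lemma upf_exp f k : upf f -> upf (fun t => f t ^+ k).
Proof.
move=> h; elim: k => [|k IH]; first by apply: upf_ext (upf_const 1) => t; rewrite expr0.
by apply: upf_ext (upf_mul h IH) => t; rewrite exprS.
Qed.
Lemma upf_sum (I : Type) (r : seq I) (P : pred I) F : (forall i, upf (F i)) ->
  upf (fun t => \sum_(i <- r | P i) F i t).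
Proof.
move=> h; elim: r => [|i r IH].
  by apply: upf_ext (upf_const 0) => t; rewrite big_nil.
case hPi : (P i).
  by apply: upf_ext (upf_add (h i) IH) => t; rewrite big_cons hPi.
by apply: upf_ext IH => t; rewrite big_cons hPi.
Qed.
Lemma upf_prod (I : Type) (r : seq I) (P : pred I) F : (forall i, upf (F i)) ->
  upf (fun t => \prod_(i <- r | P i) F i t).
Proof.
move=> h; elim: r => [|i r IH].
  by apply: upf_ext (upf_const 1) => t; rewrite big_nil.
case hPi : (P i).
  by apply: upf_ext (upf_mul (h i) IH) => t; rewrite big_cons hPi.
by apply: upf_ext IH => t; rewrite big_cons hPi.
Qed.

Lemma upoly N (p : {mpoly C[N]}) (a c : 'I_N -> C) :
  upf (fun t => p.@[fun k => a k + t * c k]).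
Proof.
apply: (@upf_ext (fun t => \sum_(m <- msupp p) p@_m * \prod_i (a i + t * c i) ^+ m i)).
  by move=> t; rewrite mevalE.
apply: upf_sum => m; apply: upf_mul; first exact: upf_const.
apply: upf_prod => i; apply: upf_exp; apply: upf_add; first exact: upf_const.
by apply: upf_mul; [exact: upf_id | exact: upf_const].
Qed.

Lemma upf_zero (P : {poly C}) : (forall t, P.[t] = 0) -> P = 0.
Proof.
move=> h; apply/eqP/negPn/negP => hP.
suff : (size [seq (i%:R : C) | i <- iota 0 (size P)] < size P)%N.
  by rewrite size_map size_iota ltnn.
apply: max_poly_roots => //.
  by apply/allP => x /mapP [i _ ->]; rewrite /root h.
rewrite map_inj_uniq ?iota_uniq //; exact: (mulrIn (@oner_neq0 C)).
Qed.

Lemma vanish (P Q : {poly C}) t1 : (forall t, Q.[t] != 0 -> P.[t] = 0) ->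
  Q.[t1] != 0 -> forall t, P.[t] = 0.
Proof.
move=> h hQ t.
have hPQ : P * Q = 0.
  apply: upf_zero => x; rewrite hornerM.
  by case: (eqVneq Q.[x] 0) => [->|hx]; [rewrite mulr0 | rewrite h // mul0r].
have Q0 : Q != 0 by apply: contraNneq hQ => ->; rewrite horner0.
move/eqP: hPQ; rewrite mulf_eq0 (negPf Q0) orbF => /eqP ->.
by rewrite horner0.
Qed.
End Upoly.

From Stdlib Require Import FunctionalExtensionality.

Section Main.
Variable C : numFieldType.
Variable n : nat.

Lemma tens_diag (x : 'I_n -> 'M[C]_2) (u v : 'I_(2 ^ n)) :
  (forall l (a b : 'I_2), a != b -> x l a b = 0) -> u != v -> tens x u v = 0.
Proof.
move=> hx huv; rewrite tensE.
case: (pickP (fun l => bits u l != bits v l)) => [l hl | h].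
  by rewrite (bigD1 l) //= hx // mul0r.
have euv : u = v by apply: bits_inj; apply/ffunP => l; move: (h l) => /= /negbFE /eqP.
by rewrite euv eqxx in huv.
Qed.

Lemma upd_diag (y : 'M[C]_2) (k : 'I_n) : (forall (a b : 'I_2), a != b -> y a b = 0) ->
  forall l (a b : 'I_2), a != b -> upd k y l a b = 0.
Proof. by move=> hy l a b hab; rewrite /upd; case: ifP => _; [exact: hy | rewrite mxE (negPf hab)]. Qed.

Lemma sz_diag (a b : 'I_2) : a != b -> sz C a b = 0.
Proof. by move=> hab; rewrite mxE (negPf hab) mul0r. Qed.

Lemma coordL_lin (s W : 'M[C]_(2 ^ n)) t :
  coordL (s + t *: W) =1 (fun k => coordL s k + t * coordL W k).
Proof. by move=> k; rewrite /coordL linearD linearZ !mxE. Qed.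

Lemma coordE_lin (b : 'I_n -> 'M[C]_2) (s W : 'M[C]_(2 ^ n)) t :
  coordE b (s + t *: W) =1
  (fun k => coordE b s k + t * (row_mx 0 (mxvec W) : 'rV_(n * (2 * 2) + 2 ^ n * 2 ^ n)) 0 k).
Proof.
move=> k; rewrite /coordE linearD linearZ.
have -> : row_mx (mxvec (\matrix_(i < n) mxvec (b i))) (mxvec s + t *: mxvec W) =
  row_mx (mxvec (\matrix_(i < n) mxvec (b i))) (mxvec s) + t *: row_mx 0 (mxvec W).
  by rewrite scale_row_mx scaler0 add_row_mx addr0.
by rewrite !mxE.
Qed.

Lemma bloch_path (A B : 'M[C]_(2 ^ n)) t :
  bloch (A + t *: (B - A)) = bloch A + t *: (bloch B - bloch A).
Proof. by rewrite /bloch opprB addrA subrK addrAC. Qed.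

Lemma bloch_D0 (y : 'I_n -> 'M[C]_2) :
  bloch ((2 ^ n)%:R^-1 *: 1%:M + \sum_k tens (upd k (y k))) = \sum_k tens (upd k (y k)).
Proof. by rewrite /bloch addrAC subrr add0r. Qed.

Lemma tr_D0 (y : 'I_n -> 'M[C]_2) : (forall k, in_sl2 (y k)) ->
  \tr ((2 ^ n)%:R^-1 *: 1%:M + \sum_k tens (upd k (y k))) = 1.
Proof.
move=> hy; rewrite mxtraceD mxtraceZ mxtrace1 mulVf ?two_pow_neq0 // mxtrace_sum.
by rewrite big1 ?addr0 // => k _; rewrite tr_tens_upd.
Qed.

Lemma conj_path (G Gi X Y : 'M[C]_(2 ^ n)) t :
  G *m X *m Gi + t *: (G *m Y *m Gi - G *m X *m Gi) = G *m (X + t *: (Y - X)) *m Gi.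
Proof. by rewrite mulmxDr mulmxDl -scalemxAr -scalemxAl mulmxBr mulmxBl. Qed.

Theorem main :
  exists (q : {mpoly C[2 ^ n * 2 ^ n]})
         (pb : 'I_n -> 'I_2 -> 'I_2 -> {mpoly C[2 ^ n * 2 ^ n]}),
  [/\ (forall f : {mpoly C[2 ^ n * 2 ^ n]},
         (forall rho, in_X rho -> polyL q rho != 0 -> polyL f rho = 0) ->
         forall rho, in_X rho -> polyL f rho = 0),
      (forall F : {mpoly C[n * (2 * 2) + 2 ^ n * 2 ^ n]},
         (forall b rho, in_E b rho -> polyL q rho != 0 -> polyE F b rho = 0) ->
         forall b rho, in_E b rho -> polyE F b rho = 0),
      (forall rho, in_X rho -> polyL q rho != 0 ->
         in_E (ratmap pb q rho) rho)
    & (forall b rho, in_E b rho -> polyL q rho != 0 ->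
         forall i, exists c : C, c != 0 /\ b i = c *: ratmap pb q rho i)].
Proof.
pose M (rho : 'M[C]_(2 ^ n)) i := Mop i (bloch rho).
pose qf rho := \prod_i bform (M rho i) (M rho i).
have pf_bloch j k : pf (fun rho : 'M[C]_(2 ^ n) => bloch rho j k).
  apply: (pf_ext (f := fun rho => rho j k + - ((2 ^ n)%:R^-1 *: (1%:M : 'M[C]_(2 ^ n))) j k)).
    by move=> rho; rewrite /bloch [in RHS]mxE [in RHS]mxE.
  by apply: pf_add; [exact: pf_entry | exact: pf_const].
have pf_M i a a' : pf (fun rho => M rho i a a').
  apply: (pf_ext (f := fun rho => \sum_u \sum_v bloch rho u v * tens (upd i (delta_mx a' a)) v u)).
    by move=> rho; rewrite /M mxE /mxtrace; apply: eq_bigr => u _; rewrite mxE.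
  by apply: pf_sum => u; apply: pf_sum => v; apply: pf_mul; [exact: pf_bloch | exact: pf_const].
have pf_q : pf qf.
  apply: pf_prod => i.
  apply: (pf_ext (f := fun rho => (\sum_a \sum_b M rho i a b * M rho i b a) * 2%:R^-1)).
    by move=> rho; rewrite /bform /mxtrace; congr (_ * _); apply: eq_bigr => a _; rewrite mxE.
  apply: pf_mul; last exact: pf_const.
  by apply: pf_sum => a; apply: pf_sum => b; apply: pf_mul; apply: pf_M.
have [q hq] := pf_q.
have [pb hpb] : exists pb : 'I_n -> 'I_2 -> 'I_2 -> {mpoly C[2 ^ n * 2 ^ n]},
    forall i a a' rho, M rho i a a' * qf rho = polyL (pb i a a') rho.
  have [pbf hpbf] : exists pbf : 'I_n * 'I_2 * 'I_2 -> {mpoly C[2 ^ n * 2 ^ n]},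
      forall x rho, M rho x.1.1 x.1.2 x.2 * qf rho = polyL (pbf x) rho.
    apply: (@fin_all_exists _ (fun _ => {mpoly C[2 ^ n * 2 ^ n]})
      (fun x p => forall rho, M rho x.1.1 x.1.2 x.2 * qf rho = polyL p rho)).
    by move=> [[i a] a']; exact: pf_mul (pf_M i a a') pf_q.
  by exists (fun i a a' => pbf (i, a, a')) => i a a' rho; rewrite -hpbf.
have hrat rho : qf rho != 0 -> ratmap pb q rho = M rho.
  move=> hq0; apply: functional_extensionality => i.
  by apply/matrixP => a a'; rewrite mxE -hpb -hq mulfK.
have qnz rho i : qf rho != 0 -> bform (M rho i) (M rho i) != 0.
  by move/prodf_neq0; apply.
exists q, pb; split.
- move=> f Hf rho hX; apply: hX => s hs.
  have htrs : \tr s = 1 by case: hs.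
  have [g [hg [D [hD es]]]] := Xstate_decomp hs.
  have hGGi : tens g *m tens (fun l => invmx (g l)) = 1%:M.
    by rewrite tens_mul -tens1; apply: eq_tens => l; rewrite mulmxV.
  have hGiG : tens (fun l => invmx (g l)) *m tens g = 1%:M.
    by rewrite tens_mul -tens1; apply: eq_tens => l; rewrite mulVmx.
  pose D0 := (2 ^ n)%:R^-1 *: (1%:M : 'M[C]_(2 ^ n)) + \sum_k tens (upd k (sz C)).
  have hD0 : Xshape D0.
    move=> u v huv; have nuv : u != v by apply: contraNneq huv => ->.
    rewrite /D0 !mxE (negPf nuv) mulr0 add0r.
    rewrite summxE big1 // => k _; apply: tens_diag nuv; apply: upd_diag; exact: sz_diag.
  pose s0 := tens g *m D0 *m tens (fun l => invmx (g l)).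
  have trs0 : \tr s0 = 1.
    rewrite /s0 mxtrace_mulC mulmxA hGiG mul1mx tr_D0 // => k; exact: sz_sl2.
  pose st t := s + t *: (s0 - s).
  have est t : st t = tens g *m (D + t *: (D0 - D)) *m tens (fun l => invmx (g l)).
    by rewrite /st es /s0 conj_path.
  have hXs t : is_Xstate (st t).
    rewrite est; apply: Xstate_of => //.
      move=> u v huv; move: (hD0 u v huv); rewrite !mxE => ->.
      by rewrite hD // subrr mulr0 addr0.
    by rewrite -est /st mxtraceD mxtraceZ mxtraceB trs0 htrs subrr mulr0 addr0.
  have hq0 : polyL q s0 != 0.
    rewrite -hq /qf; apply/prodf_neq0 => i _.
    have -> : M s0 i = g i *m (@kap C n i *: sz C) *m invmx (g i).
      rewrite /M /s0 bloch_conj // Mop_conj // bloch_D0 Mop_sum_upd //.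
      move=> k; exact: sz_sl2.
    by rewrite bform_conj // bform_scale bform_sz mulr1; apply: mulf_neq0; exact: kap_neq0.
  have [P hP] := upoly f (coordL s) (coordL (s0 - s)).
  have [Q hQ] := upoly q (coordL s) (coordL (s0 - s)).
  have evP t : polyL f (st t) = P.[t].
    by rewrite -hP /polyL; apply: meval_eq; exact: coordL_lin.
  have evQ t : polyL q (st t) = Q.[t].
    by rewrite -hQ /polyL; apply: meval_eq; exact: coordL_lin.
  have H0 : P.[0] = 0.
    apply: (@vanish _ P Q 1).
    - move=> t; rewrite -evQ -evP; apply: Hf; by move=> p hp; exact: hp _ (hXs t).
    - by rewrite -evQ /st scale1r addrC subrK.
  by have := evP 0; rewrite /st scale0r addr0 H0.
- move=> F HF b rho hE; have [hb htr hXf] := hE.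
  have hsl k : in_sl2 (b k) by case: (hb k).
  pose rho0 := (2 ^ n)%:R^-1 *: (1%:M : 'M[C]_(2 ^ n)) + \sum_k tens (upd k (b k)).
  pose rt t := rho + t *: (rho0 - rho).
  have hX0 : Xfib b (bloch rho0).
    rewrite /rho0 bloch_D0; apply: inspan_sum => k _; apply: inspan_gen.
    exists [set k], (fun _ => false), (upd k (b k)); split; last by [].
    - by apply/set0Pn; exists k; rewrite inE.
    - rewrite (_ : [set l in [set k] | false] = set0) ?cards0 //.
      by apply/setP => l; rewrite !inE andbF.
    - by move=> l; rewrite inE /upd => /negPf ->.
    - by move=> l; rewrite inE /upd => /eqP ->; rewrite eqxx; exists 1; rewrite scale1r.
  have hEt t : in_E b (rt t).
    split => //.
      by rewrite /rt mxtraceD mxtraceZ mxtraceB htr tr_D0 // subrr mulr0 addr0.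
    rewrite /rt bloch_path; apply: inspanD => //; apply: inspanZ.
    by rewrite -scaleN1r; apply: inspanD => //; exact: inspanZ.
  have hq0 : polyL q rho0 != 0.
    rewrite -hq /qf; apply/prodf_neq0 => i _.
    rewrite /M /rho0 bloch_D0 Mop_sum_upd // bform_scale.
    apply: mulf_neq0; first by apply: mulf_neq0; exact: kap_neq0.
    by case: (hb i).
  have [P hP] := upoly F (coordE b rho)
     (fun k => (row_mx 0 (mxvec (rho0 - rho)) : 'rV_(n * (2 * 2) + 2 ^ n * 2 ^ n)) 0 k).
  have [Q hQ] := upoly q (coordL rho) (coordL (rho0 - rho)).
  have evP t : polyE F b (rt t) = P.[t].
    by rewrite -hP /polyE; apply: meval_eq; exact: coordE_lin.
  have evQ t : polyL q (rt t) = Q.[t].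
    by rewrite -hQ /polyL; apply: meval_eq; exact: coordL_lin.
  have H0 : P.[0] = 0.
    apply: (@vanish _ P Q 1).
    - move=> t; rewrite -evQ -evP; exact: HF.
    - by rewrite -evQ /rt scale1r addrC subrK.
  by have := evP 0; rewrite /rt scale0r addr0 H0.
- move=> rho hX; rewrite -hq => hq0; rewrite hrat //.
  have [p hp] : pf (fun rho : 'M[C]_(2 ^ n) => \tr rho + - 1).
    apply: (pf_ext (f := fun rho => \sum_j rho j j + - 1)) => //.
    by apply: pf_add; [apply: pf_sum => j; exact: pf_entry | exact: pf_const].
  have htr : \tr rho = 1.
    have h0 : polyL p rho = 0.
      by apply: hX => s hs; rewrite -hp; case: hs => -> _; rewrite subrr.
    by move: h0; rewrite -hp => /eqP; rewrite subr_eq0 => /eqP.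
  have hcomm : rho *m tens (M rho) = tens (M rho) *m rho.
    apply/matrixP => j k.
    have [p' hp'] : pf (fun r => (r *m tens (M r)) j k + - (tens (M r) *m r) j k).
      apply: (pf_ext (f := fun r => \sum_l r j l * \prod_i M r i (bits l i) (bits k i) +
          - \sum_l (\prod_i M r i (bits j i) (bits l i)) * r l k)).
        move=> r; rewrite [(r *m _) j k]mxE [(tens _ *m r) j k]mxE.
        by congr (_ - _); apply: eq_bigr => l _; rewrite tensE.
      apply: pf_add; last apply: pf_opp; apply: pf_sum => l; apply: pf_mul.
      + exact: pf_entry.
      + by apply: pf_prod => i; apply: pf_M.
      + by apply: pf_prod => i; apply: pf_M.
      + exact: pf_entry.
    have h0 : polyL p' rho = 0.
      by apply: hX => s hs; rewrite -hp' /M (Xstate_comm hs) subrr.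
    by move: h0; rewrite -hp' => /eqP; rewrite subr_eq0 => /eqP.
  have hPb i : Pbreve_rep (M rho i).
    split; last exact: qnz.
    by rewrite /in_sl2 /M Mop_tr bloch_tr htr subrr.
  split => //; apply: key => //; first by rewrite bloch_tr htr subrr.
  by rewrite /bloch mulmxBl mulmxBr -scalemxAl -scalemxAr mul1mx mulmx1 hcomm.
- move=> b rho [hb htr hX]; rewrite -hq => hq0 i.
  have hsl l : in_sl2 (b l) by case: (hb l).
  have [c hc] := Mop_Xfib i hsl hX.
  have c0 : c != 0.
    apply: contraNneq (qnz rho i hq0) => c0.
    by rewrite /M hc c0 scale0r /bform mulmx0 mxtrace0 mul0r.
  exists c^-1; split; first by rewrite invr_eq0.
  by rewrite hrat // /M hc scalerA mulVf // scale1r.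
Qed.
End Main.

Unset Implicit Arguments.
Set Strict Implicit.

Theorem corollary4p15 (R : realType) (n : nat) :
  exists (q : {mpoly R[i][2 ^ n * 2 ^ n]})
         (pb : 'I_n -> 'I_2 -> 'I_2 -> {mpoly R[i][2 ^ n * 2 ^ n]}),
  [/\ (* V = X /\ D(q) is dense in X *)
      (forall f : {mpoly R[i][2 ^ n * 2 ^ n]},
         (forall rho, in_X rho -> polyL q rho != 0 -> polyL f rho = 0) ->
         forall rho, in_X rho -> polyL f rho = 0),
      (* U = pi^{-1}(D(q)) is dense in E *)
      (forall F : {mpoly R[i][n * (2 * 2) + 2 ^ n * 2 ^ n]},
         (forall b rho, in_E b rho -> polyL q rho != 0 -> polyE F b rho = 0) ->
         forall b rho, in_E b rho -> polyE F b rho = 0),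
      (* the inverse maps V into E (and pi o inverse = id on V) *)
      (forall rho, in_X rho -> polyL q rho != 0 ->
         in_E (ratmap pb q rho) rho)
    & (* inverse o pi = id on U *)
      (forall b rho, in_E b rho -> polyL q rho != 0 ->
         forall i, exists c : R[i], c != 0 /\ b i = c *: ratmap pb q rho i)].
Proof. exact: (main (R[i]) n). Qed.
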